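(* Let $g_{00},g_{11},g_{22},g_{33}$ solve system (SL) with positive initial data satisfying $h_{22}\le h_{33}$. Then $g_{11}^{3/5}\,g_{22}$ is strictly increasing along the flow.
   Context: Let $\det h = h_{00}h_{11}h_{22}h_{33}$, $\beta = \frac{1}{6(\det h)^2}$, and $p(x,y,z) = x^4 - x^3(y+z) + x^2yz + x(-y^3+y^2z+yz^2-z^3) + y^4 - y^3z - yz^3 + z^4$, $q(x,y,z) = 5x^4 - 3x^3(y+z) + x^2yz + x(y^3-y^2z-yz^2+z^3) - 3y^4 + 3y^3z + 3yz^3 - 3z^4$. System (SL): $\dot g_{00} = -\beta\,p(-g_{11},g_{22},g_{33})\,g_{00}^3$, $\dot g_{11} = -\beta\,q(-g_{11},g_{22},g_{33})\,g_{00}^2g_{11}$, $\dot g_{22} = -\beta\,q(g_{22},-g_{11},g_{33})\,g_{00}^2g_{22}$, $\dot g_{33} = -\beta\,q(g_{33},-g_{11},g_{22})\,g_{00}^2g_{33}$, with $g_{ii}(0)=h_{ii}>0$. (This is Bach flow on $\mathbb{R}\times\widetilde{SL}(2,\mathbb{R})$ in a diagonalizing basis.) *)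

(* Defs.v *)
From Stdlib Require Import Reals Lra.
Open Scope R_scope.

Definition pSL (x y z : R) : R :=
  x^4 - x^3*(y+z) + x^2*y*z + x*(- y^3 + y^2*z + y*z^2 - z^3)
  + y^4 - y^3*z - y*z^3 + z^4.

Definition qSL (x y z : R) : R :=
  5*x^4 - 3*x^3*(y+z) + x^2*y*z + x*(y^3 - y^2*z - y*z^2 + z^3)
  - 3*y^4 + 3*y^3*z + 3*y*z^3 - 3*z^4.

(* beta = 1 / (6 (det h)^2), det h = h00 h11 h22 h33 *)
Definition betaSL (h00 h11 h22 h33 : R) : R :=
  1 / (6 * (h00 * h11 * h22 * h33)^2).

Definition solves_SL (h00 h11 h22 h33 T : R) (g00 g11 g22 g33 : R -> R) : Prop :=
  let b := betaSL h00 h11 h22 h33 in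
  g00 0 = h00 /\ g11 0 = h11 /\ g22 0 = h22 /\ g33 0 = h33 /\
  forall t, 0 <= t < T ->
    derivable_pt_lim g00 t
      (- b * pSL (- g11 t) (g22 t) (g33 t) * (g00 t)^3) /\
    derivable_pt_lim g11 t
      (- b * qSL (- g11 t) (g22 t) (g33 t) * (g00 t)^2 * g11 t) /\
    derivable_pt_lim g22 t
      (- b * qSL (g22 t) (- g11 t) (g33 t) * (g00 t)^2 * g22 t) /\
    derivable_pt_lim g33 t
      (- b * qSL (g33 t) (- g11 t) (g22 t) * (g00 t)^2 * g33 t).

(* Main.v *)
Require Import Defs.
From Stdlib Require Import Reals Lra Ranalysis5.
From Coquelicot Require Import Coquelicot.
Open Scope R_scope.

Ltac cont := repeat (first [ apply continuity_pt_mult | apply continuity_pt_plus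
  | apply continuity_pt_minus | apply continuity_pt_opp
  | apply continuity_pt_const; intros ? ?; reflexivity | assumption ]).

Ltac pos := repeat (first [apply Rplus_le_le_0_compat | apply Rmult_le_pos | apply pow_le | lra]).

Lemma E_neg (a y z : R) : 0 < a -> 0 < y -> y <= z ->
  3/5 * qSL (-a) y z + qSL y (-a) z < 0.
Proof.
  intros Ha Hy Hz. set (d := z - y). assert (Hd : 0 <= d) by (unfold d; lra).
  replace z with (y + d) by (unfold d; ring).
  assert (H1 : 0 <= 24*d^4 + 82*y*d^3 + 102*y^2*d^2 + 60*y^3*d + 18*a*d^3
      + 46*a*y*d^2 + 40*a*y^2*d + 2*a^2*y*d + 6*a^3*d + 2*a^3*y) by (clearbody d; pos).
  assert (H2 : 0 < a^2*y^2) by (apply Rmult_lt_0_compat; apply pow_lt; lra).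
  unfold qSL.
  clearbody d.
  match goal with |- ?L < 0 => replace L with (-(1/5) * ((24*d^4 + 82*y*d^3 + 102*y^2*d^2 + 60*y^3*d + 18*a*d^3
      + 46*a*y*d^2 + 40*a*y^2*d + 2*a^2*y*d + 6*a^3*d + 2*a^3*y) + 2 * (a^2*y^2))) by field end.
  lra.
Qed.

Lemma G_fact (x y z : R) :
  z * qSL z x y - y * qSL y x z =
  (z - y) * (5*(z-y)^4 + 25*y*(z-y)^3 + 49*y^2*(z-y)^2 + 48*y^3*(z-y) + 24*y^4
   + 3*(-x)*(z-y)^3 + 14*(-x)*y*(z-y)^2 + 24*(-x)*y^2*(z-y) + 16*(-x)*y^3
   - (-x)^2*y*(z-y) - (-x)^2*y^2 - (-x)^3*(z-y) - 2*(-x)^3*y - 3*(-x)^4).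
Proof. unfold qSL. ring. Qed.

Lemma exp_lin_deriv (c x : R) : derivable_pt_lim (fun t => exp (c * t)) x (c * exp (c * x)).
Proof. apply is_derive_Reals. auto_derive; auto. ring. Qed.

Lemma lin_bounds (f k : R -> R) (T : R) :
  (forall t, 0 <= t < T -> derivable_pt_lim f t (k t * f t)) ->
  (forall t, 0 <= t < T -> continuity_pt k t) ->
  forall t1, 0 <= t1 < T -> exists M, 0 <= M /\
    f 0 ^ 2 * exp (- (2 * M) * t1) <= f t1 ^ 2 /\
    f t1 ^ 2 <= f 0 ^ 2 * exp (2 * M * t1).
Proof.
  intros Hd Hc t1 Ht1.
  destruct (Req_dec t1 0) as [E|Hne].
  { subst t1. exists 0. rewrite !Rmult_0_r, exp_0. lra. }
  assert (Hab : 0 <= t1) by lra.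
  destruct (continuity_ab_maj (fun t => Rabs (k t)) 0 t1 Hab) as [Mx [HM HMx]].
  { intros c Hc1. apply (continuity_pt_comp k Rabs). apply Hc; lra.
    apply Rcontinuity_abs. }
  set (M := Rabs (k Mx)).
  exists M. assert (HM0 : 0 <= M) by apply Rabs_pos.
  assert (Hk : forall c, 0 <= c <= t1 -> - M <= k c <= M).
  { intros c Hc1. specialize (HM c Hc1). simpl in HM.
    unfold M in *. revert HM. generalize (Rabs (k Mx)). intros r HM.
    unfold Rabs in HM. destruct (Rcase_abs (k c)); lra. }
  split; [exact HM0|]. split.
  - set (u := fun t => f t * f t * exp (2 * M * t)).
    destruct (MVT_cor2 u (fun t => 2 * (f t * f t) * exp (2*M*t) * (k t + M)) 0 t1)
      as [c [Hc1 Hc2]]; [lra| |].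
    { intros c Hc1. unfold u.
      assert (Hf := Hd c ltac:(lra)).
      replace (2 * (f c * f c) * exp (2*M*c) * (k c + M)) with
        ((k c * f c * f c + f c * (k c * f c)) * exp (2*M*c) + f c * f c * (2*M * exp (2*M*c))) by ring.
      apply (derivable_pt_lim_mult (fun t => f t * f t) (fun t => exp (2*M*t))).
      - apply (derivable_pt_lim_mult f f); auto.
      - apply exp_lin_deriv. }
    unfold u in Hc1. rewrite Rmult_0_r, exp_0 in Hc1.
    assert (0 <= 2 * (f c * f c) * exp (2 * M * c) * (k c + M) * (t1 - 0)).
    { assert (Hkc := Hk c ltac:(lra)).
      pose proof (exp_pos (2*M*c)).
      assert (0 <= f c * f c) by nra.
      apply Rmult_le_pos; [|lra]. apply Rmult_le_pos; [|lra]. nra. }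
    assert (f t1 * f t1 * exp (2*M*t1) >= f 0 * f 0) by lra.
    assert (exp (- (2*M) * t1) * exp (2*M*t1) = 1).
    { rewrite <- exp_plus. replace (- (2 * M) * t1 + 2 * M * t1) with 0 by ring. apply exp_0. }
    pose proof (exp_pos (- (2*M) * t1)).
    simpl. rewrite !Rmult_1_r. nra.
  - set (u := fun t => f t * f t * exp (- (2 * M) * t)).
    destruct (MVT_cor2 u (fun t => 2 * (f t * f t) * exp (- (2*M)*t) * (k t - M)) 0 t1)
      as [c [Hc1 Hc2]]; [lra| |].
    { intros c Hc1. unfold u.
      assert (Hf := Hd c ltac:(lra)).
      replace (2 * (f c * f c) * exp (- (2*M)*c) * (k c - M)) with
        ((k c * f c * f c + f c * (k c * f c)) * exp (- (2*M)*c) + f c * f c * (- (2*M) * exp (- (2*M)*c))) by ring.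
      apply (derivable_pt_lim_mult (fun t => f t * f t) (fun t => exp (- (2*M)*t))).
      - apply (derivable_pt_lim_mult f f); auto.
      - apply exp_lin_deriv. }
    unfold u in Hc1. rewrite Rmult_0_r, exp_0 in Hc1.
    assert (2 * (f c * f c) * exp (- (2 * M) * c) * (k c - M) * (t1 - 0) <= 0).
    { assert (Hkc := Hk c ltac:(lra)).
      pose proof (exp_pos (- (2*M)*c)).
      assert (0 <= f c * f c) by nra.
      assert (0 <= 2 * (f c * f c) * exp (- (2 * M) * c)) by (apply Rmult_le_pos; nra).
      assert (0 <= (M - k c) * (t1 - 0)) by (apply Rmult_le_pos; lra).
      nra. }
    assert (f t1 * f t1 * exp (- (2*M)*t1) <= f 0 * f 0) by lra.
    assert (exp (- (2*M) * t1) * exp (2*M*t1) = 1).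
    { rewrite <- exp_plus. replace (- (2 * M) * t1 + 2 * M * t1) with 0 by ring. apply exp_0. }
    pose proof (exp_pos (2*M * t1)).
    simpl. rewrite !Rmult_1_r. nra.
Qed.

Lemma lin_pos (f k : R -> R) (T : R) :
  (forall t, 0 <= t < T -> derivable_pt_lim f t (k t * f t)) ->
  (forall t, 0 <= t < T -> continuity_pt k t) ->
  0 < f 0 -> forall t, 0 <= t < T -> 0 < f t.
Proof.
  intros Hd Hc H0.
  assert (Hnz : forall t, 0 <= t < T -> f t <> 0).
  { intros t Ht E. destruct (lin_bounds f k T Hd Hc t Ht) as [M [_ [H1 _]]].
    rewrite E in H1. pose proof (exp_pos (- (2 * M) * t)).
    assert (0 < f 0 ^ 2) by (apply pow_lt; lra). simpl in H1. nra. }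
  intros t Ht. destruct (Rlt_or_le 0 (f t)) as [|Hle]; [assumption|].
  exfalso. assert (Hlt : f t < 0) by (destruct Hle; [auto| exfalso; apply (Hnz t Ht); auto]).
  assert (Htp : 0 < t) by (destruct (Req_dec t 0); [subst; lra | lra]).
  destruct (IVT_interv (fun x => - f x) 0 t) as [z [Hz1 Hz2]]; [| lra | lra | lra |].
  - intros a Ha. apply continuity_pt_opp.
    apply derivable_continuous_pt. exists (k a * f a). apply Hd. lra.
  - apply (Hnz z). lra. lra.
Qed.

Lemma lin_zero (f k : R -> R) (T : R) :
  (forall t, 0 <= t < T -> derivable_pt_lim f t (k t * f t)) ->
  (forall t, 0 <= t < T -> continuity_pt k t) ->
  f 0 = 0 -> forall t, 0 <= t < T -> f t = 0.
Proof.
  intros Hd Hc H0 t Ht. destruct (lin_bounds f k T Hd Hc t Ht) as [M [_ [_ H1]]].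
  rewrite H0 in H1. simpl in H1. rewrite Rmult_0_l, Rmult_0_l in H1.
  assert (0 <= f t * f t) by nra. nra.
Qed.

Lemma lin_nonneg (f k : R -> R) (T : R) :
  (forall t, 0 <= t < T -> derivable_pt_lim f t (k t * f t)) ->
  (forall t, 0 <= t < T -> continuity_pt k t) ->
  0 <= f 0 -> forall t, 0 <= t < T -> 0 <= f t.
Proof.
  intros Hd Hc H0 t Ht. destruct H0.
  - left. apply (lin_pos f k T); auto.
  - right. symmetry. apply (lin_zero f k T); auto.
Qed.

Lemma dlim_eq (f : R -> R) t l l' : derivable_pt_lim f t l -> l = l' -> derivable_pt_lim f t l'.
Proof. intros H E; subst; auto. Qed.

Lemma dcont (f : R -> R) t l : derivable_pt_lim f t l -> continuity_pt f t.
Proof. intros H. apply derivable_continuous_pt. exists l. exact H. Qed.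

Theorem lemma5p12 (h00 h11 h22 h33 T : R) (g00 g11 g22 g33 : R -> R) :
  0 < h00 -> 0 < h11 -> 0 < h22 -> 0 < h33 -> h22 <= h33 -> 0 < T ->
  solves_SL h00 h11 h22 h33 T g00 g11 g22 g33 ->
  forall s t, 0 <= s -> s < t -> t < T ->
    Rpower (g11 s) (3/5) * g22 s < Rpower (g11 t) (3/5) * g22 t.
Proof.
  intros H0 H1 H2 H3 H23 HT Hs s t Hs0 Hst HtT.
  unfold solves_SL in Hs. set (b := betaSL h00 h11 h22 h33) in Hs.
  assert (Hb : 0 < b).
  { unfold b, betaSL. apply Rdiv_lt_0_compat; [lra|].
    apply Rmult_lt_0_compat; [lra|]. apply pow_lt.
    repeat apply Rmult_lt_0_compat; lra. }
  clearbody b.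
  destruct Hs as [E0 [E1 [E2 [E3 HD]]]].
  assert (C00 : forall t, 0 <= t < T -> continuity_pt g00 t) by
    (intros; eapply dcont; apply (HD _ H)).
  assert (C11 : forall t, 0 <= t < T -> continuity_pt g11 t) by
    (intros; eapply dcont; apply (HD _ H)).
  assert (C22 : forall t, 0 <= t < T -> continuity_pt g22 t) by
    (intros; eapply dcont; apply (HD _ H)).
  assert (C33 : forall t, 0 <= t < T -> continuity_pt g33 t) by
    (intros; eapply dcont; apply (HD _ H)).
  assert (P00 : forall t, 0 <= t < T -> 0 < g00 t).
  { apply (lin_pos g00 (fun t => - b * pSL (- g11 t) (g22 t) (g33 t) * g00 t ^ 2) T).
    - intros u Hu. eapply dlim_eq. apply (HD u Hu). ring.
    - intros u Hu. specialize (C00 u Hu). specialize (C11 u Hu). specialize (C22 u Hu).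
      specialize (C33 u Hu). unfold pSL. simpl pow. cont.
    - lra. }
  assert (P11 : forall t, 0 <= t < T -> 0 < g11 t).
  { apply (lin_pos g11 (fun t => - b * qSL (- g11 t) (g22 t) (g33 t) * g00 t ^ 2) T).
    - intros u Hu. eapply dlim_eq. apply (HD u Hu). ring.
    - intros u Hu. specialize (C00 u Hu). specialize (C11 u Hu). specialize (C22 u Hu).
      specialize (C33 u Hu). unfold qSL. simpl pow. cont.
    - lra. }
  assert (P22 : forall t, 0 <= t < T -> 0 < g22 t).
  { apply (lin_pos g22 (fun t => - b * qSL (g22 t) (- g11 t) (g33 t) * g00 t ^ 2) T).
    - intros u Hu. eapply dlim_eq. apply (HD u Hu). ring.
    - intros u Hu. specialize (C00 u Hu). specialize (C11 u Hu). specialize (C22 u Hu).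
      specialize (C33 u Hu). unfold qSL. simpl pow. cont.
    - lra. }
  assert (P23 : forall t, 0 <= t < T -> 0 <= g33 t - g22 t).
  { apply (lin_nonneg (fun t => g33 t - g22 t)
     (fun t => - b * g00 t ^ 2 *
       (let x := - g11 t in let y := g22 t in let z := g33 t in
       5*(z-y)^4 + 25*y*(z-y)^3 + 49*y^2*(z-y)^2 + 48*y^3*(z-y) + 24*y^4
   + 3*(-x)*(z-y)^3 + 14*(-x)*y*(z-y)^2 + 24*(-x)*y^2*(z-y) + 16*(-x)*y^3
   - (-x)^2*y*(z-y) - (-x)^2*y^2 - (-x)^3*(z-y) - 2*(-x)^3*y - 3*(-x)^4)) T).
    - intros u Hu. destruct (HD u Hu) as [_ [_ [D2 D3]]].
      eapply dlim_eq. apply (derivable_pt_lim_minus g33 g22); eauto.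
      cbv zeta.
      transitivity (- b * g00 u ^ 2 * (g33 u * qSL (g33 u) (- g11 u) (g22 u)
         - g22 u * qSL (g22 u) (- g11 u) (g33 u))); [ring|].
      rewrite G_fact. ring.
    - intros u Hu. specialize (C00 u Hu). specialize (C11 u Hu). specialize (C22 u Hu).
      specialize (C33 u Hu). cbv zeta. simpl pow. cont.
    - lra. }
  destruct (MVT_cor2 (fun u => Rpower (g11 u) (3/5) * g22 u)
     (fun u => Rpower (g11 u) (3/5) * g22 u * (- b * g00 u ^ 2) *
        (3/5 * qSL (- g11 u) (g22 u) (g33 u) + qSL (g22 u) (- g11 u) (g33 u))) s t)
     as [c [Hc1 Hc2]]; [lra| |].
  { intros c Hc. assert (Hc' : 0 <= c < T) by lra.
    destruct (HD c Hc') as [_ [D1 [D2 _]]].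
    pose proof (P11 c Hc') as Pc.
    assert (DR := derivable_pt_lim_comp g11 (fun x => Rpower x (3/5)) c _ _ D1
                    (derivable_pt_lim_power (g11 c) (3/5) Pc)).
    eapply dlim_eq. apply (derivable_pt_lim_mult (fun u => Rpower (g11 u) (3/5)) g22).
    exact DR. exact D2.
    unfold comp.
    assert (RP : Rpower (g11 c) (3/5) = Rpower (g11 c) (3/5 - 1) * g11 c).
    { rewrite <- (Rpower_1 (g11 c)) at 3; [|lra]. rewrite <- Rpower_plus. f_equal. ring. }
    rewrite RP. ring. }
  assert (Hc' : 0 <= c < T) by lra.
  assert (Hneg := E_neg (g11 c) (g22 c) (g33 c) (P11 c Hc') (P22 c Hc')
                   ltac:(pose proof (P23 c Hc'); lra)).
  assert (0 < Rpower (g11 c) (3/5)) by (unfold Rpower; apply exp_pos).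
  assert (0 < g00 c ^ 2) by (apply pow_lt; apply P00; lra).
  pose proof (P22 c Hc').
  assert (0 < Rpower (g11 c) (3 / 5) * g22 c * (- b * g00 c ^ 2) *
   (3 / 5 * qSL (- g11 c) (g22 c) (g33 c) + qSL (g22 c) (- g11 c) (g33 c))).
  { replace (Rpower (g11 c) (3 / 5) * g22 c * (- b * g00 c ^ 2) *
   (3 / 5 * qSL (- g11 c) (g22 c) (g33 c) + qSL (g22 c) (- g11 c) (g33 c))) with
   ((Rpower (g11 c) (3 / 5) * g22 c) * (b * g00 c ^ 2) *
   (- (3 / 5 * qSL (- g11 c) (g22 c) (g33 c) + qSL (g22 c) (- g11 c) (g33 c)))) by ring.
    pose proof (P00 c Hc'). repeat apply Rmult_lt_0_compat; lra. }
  assert (0 < Rpower (g11 c) (3 / 5) * g22 c * (- b * g00 c ^ 2) *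
   (3 / 5 * qSL (- g11 c) (g22 c) (g33 c) + qSL (g22 c) (- g11 c) (g33 c)) * (t - s))
   by (apply Rmult_lt_0_compat; lra).
  lra.
Qed.
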